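(* In the setting below: (i) If $x\in M_1$, then $\mathcal{P}(x)\cap M\subseteq M_1$, hence $\mathcal{P}(x)\cap M=\mathcal{P}(x)\cap M_1$. In particular $\mathcal{P}(A)\cap M=M_1$. (ii) For every ordinal $\alpha\geq1$, if $x\in M_{\alpha+1}$, then $\mathcal{P}(x)\cap M\subseteq M_{\alpha+1}$, hence $\mathcal{P}(x)\cap M=\mathcal{P}(x)\cap M_{\alpha+1}$. In particular $\mathcal{P}(M_\alpha)\cap M=M_{\alpha+1}$.
   Context: Work in ZFA (ZF with a set $A$ of atoms, i.e. urelements that have no elements), extended by a primitive binary relation $\preccurlyeq$ on $A$, with Separation and Replacement holding for formulas mentioning $\preccurlyeq$. $A$ is an infinite set of atoms and $\preccurlyeq$ is a pre-ordering (reflexive, transitive) on $A$ with no minimal elements: for every $a\in A$ there is $b\in A$ with $b\preccurlyeq a$ and not $a\preccurlyeq b$. For $a\in A$, $pr(a)=\{b\in A:b\preccurlyeq a\}$; $LO(A,\preccurlyeq)$ is the set of nonempty $x\subseteq A$ with $pr(a)\subseteq x$ for all $a\in x$. For a set $X$ of sets, $LO(X,\subseteq)$ is the set of nonempty $x\subseteq X$ such that for every $y\in x$ and every $z\in X$ with $z\subseteq y$, $z\in x$. The magmatic hierarchy: $M_1=LO(A,\preccurlyeq)$; $M_{\alpha+1}=LO(M_\alpha,\subseteq)$ for $\alpha\geq1$; $M_\alpha=\bigcup_{1\leq\beta<\alpha}M_\beta$ for limit $\alpha$; $M=\bigcup_{\alpha\geq1}M_\alpha$. *)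

(* Defs.v *)
From Stdlib Require Import List Wellfounded.

Record ZFA_sig := {
  V :> Type;
  mem : V -> V -> Prop;
  atom : V -> Prop;
  Aset : V;
  prec : V -> V -> Prop
}.

Arguments mem {z}.
Arguments atom {z}.
Arguments Aset {z}.
Arguments prec {z}.

Definition is_set {Z : ZFA_sig} (x : Z) : Prop := ~ atom x.
Definition subset {Z : ZFA_sig} (x y : Z) : Prop := forall z, mem z x -> mem z y.

Definition ZFA_axioms (Z : ZFA_sig) : Prop :=
  (forall a x : Z, atom a -> ~ mem x a) /\
  (forall x y : Z, is_set x -> is_set y ->
     (forall z, mem z x <-> mem z y) -> x = y) /\
  well_founded (@mem Z) /\
  is_set (@Aset Z) /\
  (forall a : Z, mem a Aset <-> atom a).

Definition setting (Z : ZFA_sig) : Prop :=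
  (~ exists l : list Z, forall a, mem a Aset -> In a l) /\
  (forall a : Z, mem a Aset -> prec a a) /\
  (forall a b c : Z, mem a Aset -> mem b Aset -> mem c Aset ->
     prec a b -> prec b c -> prec a c) /\
  (forall a : Z, mem a Aset ->
     exists b, mem b Aset /\ prec b a /\ ~ prec a b).

Definition pr {Z : ZFA_sig} (a : Z) : Z -> Prop :=
  fun b => mem b Aset /\ prec b a.

Definition LO_A {Z : ZFA_sig} (x : Z) : Prop :=
  is_set x /\ (exists a, mem a x) /\ (forall a, mem a x -> mem a Aset) /\
  (forall a, mem a x -> forall b, pr a b -> mem b x).

Definition LO_sub {Z : ZFA_sig} (X : Z -> Prop) (x : Z) : Prop :=
  is_set x /\ (exists y, mem y x) /\ (forall y, mem y x -> X y) /\
  (forall y z, mem y x -> X z -> is_set z -> subset z y -> mem z x).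

(* Ordinal vocabulary on a well-order (O, lt) whose least element plays the
   role of the ordinal 1. *)
Definition is_first {O : Type} (lt : O -> O -> Prop) (a : O) : Prop :=
  forall b, ~ lt b a.
Definition succ_of {O : Type} (lt : O -> O -> Prop) (b a : O) : Prop :=
  lt b a /\ forall c, lt c a -> c = b \/ lt c b.
Definition is_limit {O : Type} (lt : O -> O -> Prop) (a : O) : Prop :=
  ~ is_first lt a /\ forall b, lt b a -> exists c, lt b c /\ lt c a.

(* (O, lt) is like the class of ordinals >= 1: a nonempty strict
   well-order (well-foundedness is passed separately) without maximum. *)
Definition ordinal_like {O : Type} (lt : O -> O -> Prop) : Prop :=
  inhabited O /\
  (forall a, ~ lt a a) /\
  (forall a b c, lt a b -> lt b c -> lt a c) /\
  (forall a b, lt a b \/ a = b \/ lt b a) /\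
  (forall a, exists b, succ_of lt a b).

Definition Mstep (Z : ZFA_sig) {O : Type} (lt : O -> O -> Prop)
  (a : O) (rec : forall b, lt b a -> Z -> Prop) : Z -> Prop :=
  fun x =>
    (is_first lt a /\ LO_A x) \/
    (exists b (h : lt b a), succ_of lt b a /\ LO_sub (rec b h) x) \/
    (is_limit lt a /\ exists b (h : lt b a), rec b h x).

Definition Mlev (Z : ZFA_sig) {O : Type} (lt : O -> O -> Prop)
  (wf : well_founded lt) : O -> Z -> Prop :=
  Fix wf (fun _ => Z -> Prop) (Mstep Z lt).

Definition Mall (Z : ZFA_sig) {O : Type} (lt : O -> O -> Prop)
  (wf : well_founded lt) (x : Z) : Prop :=
  exists a, Mlev Z lt wf a x.

(* Main.v *)
Require Import Defs.
From Stdlib Require Import List Wellfounded.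
From Stdlib Require Import Classical FunctionalExtensionality.

Lemma Mlev_unfold (Z : ZFA_sig) (O : Type) (lt : O -> O -> Prop)
  (wf : well_founded lt) (a : O) (x : Z) :
  Mlev Z lt wf a x <->
  (is_first lt a /\ LO_A x) \/
  (exists b, lt b a /\ succ_of lt b a /\ LO_sub (Mlev Z lt wf b) x) \/
  (is_limit lt a /\ exists b, lt b a /\ Mlev Z lt wf b x).
Proof.
  assert (E : Mlev Z lt wf a = Mstep Z lt a (fun b _ => Mlev Z lt wf b)).
  { unfold Mlev at 1. rewrite Fix_eq. reflexivity.
    intros y f g H.
    assert (f = g) by (apply functional_extensionality_dep; intro;
                       apply functional_extensionality_dep; intro; apply H).
    subst; reflexivity. }
  rewrite E. unfold Mstep. split.
  - intros [H|[[b [h [H1 H2]]]|[H1 [b [h H2]]]]]; eauto 10.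
  - intros [H|[[b [h [H1 H2]]]|[H1 [b [h H2]]]]]; eauto 10.
Qed.

Lemma Mall_shape (Z : ZFA_sig) (O : Type) (lt : O -> O -> Prop)
  (wf : well_founded lt) (y : Z) :
  Mall Z lt wf y -> LO_A y \/ exists e, LO_sub (Mlev Z lt wf e) y.
Proof.
  intros [g Hg]. revert Hg. induction g as [g IH] using (well_founded_ind wf).
  intro Hg. apply Mlev_unfold in Hg.
  destruct Hg as [[_ H]|[[b [_ [_ H]]]|[_ [b [hb H]]]]]; eauto.
Qed.

Lemma Mall_set (Z : ZFA_sig) (O : Type) (lt : O -> O -> Prop)
  (wf : well_founded lt) (y : Z) :
  Mall Z lt wf y -> is_set y /\ exists z, mem z y.
Proof.
  intro H; destruct (Mall_shape Z O lt wf y H) as [[? [? _]]|[e [? [? _]]]]; auto.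
Qed.

Definition Rprop (Z : ZFA_sig) (O : Type) (lt : O -> O -> Prop)
  (wf : well_founded lt) (x : Z) : Prop :=
  forall d, Mlev Z lt wf d x -> forall y, is_set y -> subset y x ->
    Mall Z lt wf y -> Mlev Z lt wf d y.

Lemma key (Z : ZFA_sig) (O : Type) (lt : O -> O -> Prop)
  (wf : well_founded lt) (HZ : ZFA_axioms Z) (e : O) (y : Z) :
  is_set y -> (forall z, mem z y -> Mlev Z lt wf e z) -> Mall Z lt wf y ->
  (forall z, mem z y -> Rprop Z O lt wf z) ->
  LO_sub (Mlev Z lt wf e) y.
Proof.
  intros Hs Hel HM IH.
  destruct HZ as [Hat [_ [_ [_ HA]]]].
  destruct (Mall_shape Z O lt wf y HM) as [[_ [[z Hz] [HyA _]]]|[g [_ [Hne [Hg Hcl]]]]].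
  - exfalso. assert (Mall Z lt wf z) as Hz' by (exists e; auto).
    destruct (Mall_set Z O lt wf z Hz') as [Hzs _].
    apply Hzs. apply HA. auto.
  - split; [exact Hs|]. split; [exact Hne|]. split; [exact Hel|].
    intros z' z Hz' Hz Hzs Hsub.
    apply (Hcl z' z Hz'); auto.
    apply (IH z' Hz' g (Hg z' Hz') z Hzs Hsub). exists e; auto.
Qed.

Lemma R_all (Z : ZFA_sig) (O : Type) (lt : O -> O -> Prop)
  (wf : well_founded lt) (HZ : ZFA_axioms Z) (x : Z) : Rprop Z O lt wf x.
Proof.
  assert (HZ' := HZ). destruct HZ' as [Hat [_ [Hwf [_ HA]]]].
  induction x as [x IHx] using (well_founded_ind Hwf).
  intro d. induction d as [d IHd] using (well_founded_ind wf).
  intros Hd y Hys Hsub HM.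
  apply Mlev_unfold in Hd.
  destruct Hd as [[Hf HLO]|[[b [hb [Hsb HLO]]]|[Hl [b [hb Hb]]]]].
  - apply Mlev_unfold. left. split; [exact Hf|].
    destruct (Mall_shape Z O lt wf y HM) as [H|[g [_ [[z Hz] [Hg _]]]]]; [exact H|].
    exfalso. destruct HLO as [_ [_ [HxA _]]].
    assert (Mall Z lt wf z) as Hz' by (exists g; auto).
    destruct (Mall_set Z O lt wf z Hz') as [Hzs _].
    apply Hzs. apply HA. auto.
  - apply Mlev_unfold. right; left. exists b. split; [exact hb|]. split; [exact Hsb|].
    destruct HLO as [_ [_ [Hel _]]].
    apply key; auto.
    all: auto.
  - apply Mlev_unfold. right; right. split; [exact Hl|]. exists b. split; [exact hb|].
    apply (IHd b hb Hb y Hys Hsub HM).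
Qed.

Lemma pred_unique (O : Type) (lt : O -> O -> Prop) :
  ordinal_like lt -> forall a b c, succ_of lt a c -> succ_of lt b c -> a = b.
Proof.
  intros [_ [Hirr [Htr [Htot _]]]] a b c [Hac Ha] [Hbc Hb].
  destruct (Htot a b) as [H|[H|H]]; auto.
  - destruct (Ha b Hbc) as [E|E]; auto. exfalso; apply (Hirr a); eauto.
  - destruct (Hb a Hac) as [E|E]; auto. exfalso; apply (Hirr a); eauto.
Qed.

Theorem proposition4p5 (Z : ZFA_sig) (O : Type) (lt : O -> O -> Prop)
  (wf : well_founded lt) :
  ZFA_axioms Z -> setting Z -> ordinal_like lt ->
  (* (i) *)
  (forall one : O, is_first lt one ->
     (forall x : Z, Mlev Z lt wf one x ->
        (forall y : Z, is_set y -> subset y x -> Mall Z lt wf y ->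
           Mlev Z lt wf one y) /\
        (forall y : Z,
           (is_set y /\ subset y x /\ Mall Z lt wf y) <->
           (is_set y /\ subset y x /\ Mlev Z lt wf one y))) /\
     (forall y : Z,
        (is_set y /\ subset y Aset /\ Mall Z lt wf y) <-> Mlev Z lt wf one y)) /\
  (* (ii) *)
  (forall alpha beta : O, succ_of lt alpha beta ->
     (forall x : Z, Mlev Z lt wf beta x ->
        (forall y : Z, is_set y -> subset y x -> Mall Z lt wf y ->
           Mlev Z lt wf beta y) /\
        (forall y : Z,
           (is_set y /\ subset y x /\ Mall Z lt wf y) <->
           (is_set y /\ subset y x /\ Mlev Z lt wf beta y))) /\
     (forall y : Z,
        (is_set y /\ (forall z, mem z y -> Mlev Z lt wf alpha z) /\
         Mall Z lt wf y) <-> Mlev Z lt wf beta y)).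
Proof.
  intros HZ HS HO.
  assert (Gen : forall d x, Mlev Z lt wf d x ->
        (forall y : Z, is_set y -> subset y x -> Mall Z lt wf y ->
           Mlev Z lt wf d y) /\
        (forall y : Z,
           (is_set y /\ subset y x /\ Mall Z lt wf y) <->
           (is_set y /\ subset y x /\ Mlev Z lt wf d y))).
  { intros d x Hx. split.
    - intros. apply (R_all Z O lt wf HZ x d Hx); auto.
    - intro y; split.
      + intros [? [? ?]]. split; [auto|]. split; [auto|].
        apply (R_all Z O lt wf HZ x d Hx); auto.
      + intros [? [? ?]]. split; [auto|]. split; [auto|]. exists d; auto. }
  split.
  - intros one Hone. split; [apply Gen|].
    intro y; split.
    + intros [Hys [HyA HM]].
      assert (HAl : Mlev Z lt wf one Aset).
      { apply Mlev_unfold. left. split; [exact Hone|].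
        destruct HZ as [_ [_ [_ [HAs _]]]].
        split; [exact HAs|]. split.
        - destruct HS as [Hinf _].
          apply NNPP; intro Hn. apply Hinf. exists nil.
          intros a Ha. exfalso; apply Hn; eauto.
        - split; [auto|]. intros a _ b [Hb _]; exact Hb. }
      apply (R_all Z O lt wf HZ Aset one HAl); auto.
    + intro H. assert (HM : Mall Z lt wf y) by (exists one; auto).
      apply Mlev_unfold in H.
      destruct H as [[_ [Hs [_ [HA _]]]]|[[b [hb _]]|[[Hl _] _]]].
      * split; [exact Hs|]. split; [exact HA|exact HM].
      * exfalso; apply (Hone b hb).
      * exfalso; apply Hl; exact Hone.
  - intros alpha beta Hab. split; [apply Gen|].
    intro y; split.
    + intros [Hys [Hel HM]]. apply Mlev_unfold. right; left.
      exists alpha. split; [apply Hab|]. split; [exact Hab|].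
      apply key; auto. intros; apply R_all; auto.
    + intro H. assert (HM : Mall Z lt wf y) by (exists beta; auto).
      apply Mlev_unfold in H.
      destruct HO as [HOi [Hirr [Htr [Htot Hsucc]]]] eqn:HOe.
      destruct H as [[Hf _]|[[b [hb [Hsb HL]]]|[[_ Hl] _]]].
      * exfalso; apply (Hf alpha); apply Hab.
      * assert (b = alpha) by (apply (pred_unique O lt HO b alpha beta); auto).
        subst b. destruct HL as [Hs [_ [Hel _]]]. auto.
      * exfalso. destruct Hab as [Hab1 Hab2].
        destruct (Hl alpha Hab1) as [c [H1 H2]].
        destruct (Hab2 c H2) as [E|E].
        -- subst; apply (Hirr alpha H1).
        -- apply (Hirr alpha); eauto.
Qed.
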